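(* For every $\Xi=(\xi_1,\dots,\xi_{n-1})\in\{0,1\}^{n-1}$, the set $B_\Xi$ is stable under all Kashiwara operators $\tilde e_i,\tilde f_i$ (i.e. if $b\in B_\Xi$ and $\tilde e_i b\neq 0$ then $\tilde e_i b\in B_\Xi$, and likewise for $\tilde f_i$) of the $\mathfrak{gl}_{2n}$-crystal $B^A(1)^{\otimes n}$ ($i=1,\dots,2n-1$), and also of the $\mathfrak{sp}_{2n}$-crystal $B^C(1)^{\otimes n}$ ($i=1,\dots,n$). Hence $B_\Xi$ is a union of connected components for both crystal structures.
   Context: Let $\mathcal{C}_n$ be the totally ordered alphabet $1<2<\cdots<n<\bar n<\overline{n-1}<\cdots<\bar1$. The crystal $B^A(1)$ of the vector representation of $U_q(\mathfrak{gl}_{2n})$ has vertex set $\mathcal{C}_n$ and arrows $1\xrightarrow{1}2\xrightarrow{2}\cdots\xrightarrow{n-1}n\xrightarrow{n}\bar n\xrightarrow{n+1}\overline{n-1}\xrightarrow{n+2}\cdots\xrightarrow{2n-1}\bar1$. The crystal $B^C(1)$ of the vector representation of $U_q(\mathfrak{sp}_{2n})$ has the same vertex set and arrows $k\xrightarrow{k}k+1$ and $\overline{k+1}\xrightarrow{k}\bar k$ for $1\le k\le n-1$, and $n\xrightarrow{n}\bar n$. Here $a\xrightarrow{i}b$ means $\tilde f_i a=b$, $\tilde e_i b=a$; $\varepsilon_i(b)$, $\varphi_i(b)$ are the number of times $\tilde e_i$, resp. $\tilde f_i$, can be applied to $b$. Tensor products use Kashiwara's convention: $\tilde f_i(b_1\otimes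 b_2)=\tilde f_ib_1\otimes b_2$ if $\varphi_i(b_1)>\varepsilon_i(b_2)$ and $b_1\otimes\tilde f_ib_2$ otherwise; $\tilde e_i(b_1\otimes b_2)=\tilde e_ib_1\otimes b_2$ if $\varphi_i(b_1)\ge\varepsilon_i(b_2)$ and $b_1\otimes\tilde e_ib_2$ otherwise; $n$-fold tensor powers are formed iteratively. Vertices of $B^A(1)^{\otimes n}$ and $B^C(1)^{\otimes n}$ are words $x_1\otimes\cdots\otimes x_n$ with $x_i\in\mathcal{C}_n$. For such a word define $\Xi(b)=(\xi_1,\dots,\xi_{n-1})$ with $\xi_i=0$ if $x_i<x_{i+1}$ and $\xi_i=1$ if $x_i\ge x_{i+1}$, and $B_\Xi=\{b:\Xi(b)=\Xi\}$. *)

(* Defs.v *)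
From mathcomp Require Import all_boot.

Set Implicit Arguments.
Unset Strict Implicit.
Unset Printing Implicit Defensive.

(* The alphabet C_n = 1 < 2 < ... < n < bar n < ... < bar 1 is encoded as    *)
(* 'I_(2n): index j < n stands for the letter j+1, index j >= n stands for   *)
(* bar(2n - j).  The total order of C_n is the natural order on indices.     *)
(* Kashiwara operators are partial functions L -> option L (None = 0).       *)
(* Operator indices i are natural numbers, as in the paper (1-based).        *)

Definition letter (n : nat) := 'I_(n.*2).

(* B^A(1): j --i--> j+1 iff j = i-1  (i.e. letter i --i--> next letter). *)
Definition fA (n : nat) (i : nat) (j : letter n) : option (letter n) :=
  if (0 < i) && (nat_of_ord j == i.-1) then insub j.+1 else None.
Definition eA (n : nat) (i : nat) (j : letter n) : option (letter n) :=
  if (0 < i) && (nat_of_ord j == i) then insub j.-1 else None.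

(* B^C(1): k --k--> k+1 and bar(k+1) --k--> bar k for 1 <= k <= n-1,
   n --n--> bar n.  In indices: for 1 <= i <= n,
   i-1 --i--> i  and  2n-i-1 --i--> 2n-i  (both coincide when i = n). *)
Definition fC (n : nat) (i : nat) (j : letter n) : option (letter n) :=
  if [&& 0 < i, i <= n & (nat_of_ord j == i.-1) || (nat_of_ord j == n.*2 - i.+1)]
  then insub j.+1 else None.
Definition eC (n : nat) (i : nat) (j : letter n) : option (letter n) :=
  if [&& 0 < i, i <= n & (nat_of_ord j == i) || (nat_of_ord j == n.*2 - i)]
  then insub j.-1 else None.

Fixpoint count_iter (T : Type) (g : T -> option T) (N : nat) (b : T) : nat :=
  match N with
  | 0 => 0
  | N'.+1 => match g b with
             | None => 0
             | Some b' => (count_iter g N' b').+1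
             end
  end.

Section Tensor.
Variables (L : Type) (f1 e1 : nat -> L -> option L) (fuelL : nat).
(* fuelL must bound the number of successive applications of f1 i (resp.
   e1 i) to a single letter; then fuelL * size r bounds it on words of
   size r, so count_iter computes exactly phi_i / eps_i. *)

(* Operators on iterated tensor powers ((x1 (x) x2) (x) x3) (x) ... (x) xk,
   represented by the REVERSED word r = [:: xk; ...; x1], so that
   x :: r' stands for b1 (x) b2 with b1 = (word of r') and b2 = x.
   Kashiwara's convention:
   f(b1(x)b2) = f b1 (x) b2 if phi(b1) > eps(b2), else b1 (x) f b2;
   e(b1(x)b2) = e b1 (x) b2 if phi(b1) >= eps(b2), else b1 (x) e b2. *)
Fixpoint tops (k : nat) :
  (nat -> seq L -> option (seq L)) * (nat -> seq L -> option (seq L)) :=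
  match k with
  | 0 => (fun _ _ => None, fun _ _ => None)
  | k'.+1 =>
    let fp := (tops k').1 in
    let ep := (tops k').2 in
    (fun i r => match r with
      | [::] => None
      | [:: x] => omap (fun y => [:: y]) (f1 i x)
      | x :: r' =>
        if count_iter (e1 i) fuelL x < count_iter (fp i) (fuelL * size r') r'
        then omap (fun r'' => x :: r'') (fp i r')
        else omap (fun y => y :: r') (f1 i x)
      end,
     fun i r => match r with
      | [::] => None
      | [:: x] => omap (fun y => [:: y]) (e1 i x)
      | x :: r' =>
        if count_iter (e1 i) fuelL x <= count_iter (fp i) (fuelL * size r') r'
        then omap (fun r'' => x :: r'') (ep i r')
        else omap (fun y => y :: r') (e1 i x)
      end)
  end.

(* Kashiwara operators on words b = [:: x1; ...; xk] (= x1 (x) ... (x) xk). *)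
Definition tens_f (i : nat) (b : seq L) : option (seq L) :=
  omap rev ((tops (size b)).1 i (rev b)).
Definition tens_e (i : nat) (b : seq L) : option (seq L) :=
  omap rev ((tops (size b)).2 i (rev b)).
End Tensor.

(* The crystals B^A(1)^{(x) n} and B^C(1)^{(x) n}.  Each f_i raises the index
   of one letter by 1 (each e_i lowers it), so n.*2 bounds phi_i, eps_i on a
   letter. *)
Definition fAn (n i : nat) := tens_f (@fA n) (@eA n) n.*2 i.
Definition eAn (n i : nat) := tens_e (@fA n) (@eA n) n.*2 i.
Definition fCn (n i : nat) := tens_f (@fC n) (@eC n) n.*2 i.
Definition eCn (n i : nat) := tens_e (@fC n) (@eC n) n.*2 i.

Definition Xi_of (n : nat) (b : seq (letter n)) : seq bool :=
  [seq (nat_of_ord p.2 <= nat_of_ord p.1) | p <- zip b (behead b)].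

Definition B_Xi (n : nat) (Xi : seq bool) (b : seq (letter n)) : bool :=
  (size b == n) && (Xi_of b == Xi).

(* Main.v *)
Require Import Defs.
From mathcomp Require Import all_boot zify.

Set Implicit Arguments.
Unset Strict Implicit.
Unset Printing Implicit Defensive.

Lemma count_iter_pos T (g : T -> option T) N b :
  0 < count_iter g N b -> exists b', g b = Some b'.
Proof. case: N => //= N. case: (g b) => // b' _; by exists b'. Qed.

Lemma count_iter_gt0 T (g : T -> option T) N b b' :
  0 < N -> g b = Some b' -> 0 < count_iter g N b.
Proof. case: N => //= N _ ->. by []. Qed.

Lemma count_iter_None T (g : T -> option T) N b :
  g b = None -> count_iter g N b = 0.
Proof. case: N => //= N ->. by []. Qed.

Lemma count_iter_le1 T (g : T -> option T) N b b' :
  g b = Some b' -> g b' = None -> count_iter g N b <= 1.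
Proof. case: N => //= N -> H. by rewrite (count_iter_None N H). Qed.

Lemma insub_ord m (x : 'I_m) k : k = nat_of_ord x -> insub k = Some x.
Proof. move=> ->; exact: valK. Qed.

Definition Xg m (s : seq 'I_m) : seq bool :=
  [seq (nat_of_ord p.2 <= nat_of_ord p.1) | p <- zip s (behead s)].

Lemma Xg_cons m (a b : 'I_m) c : Xg (a :: b :: c) = (b <= a) :: Xg (b :: c).
Proof. by []. Qed.

Lemma Xg_rcons2 m (t : seq 'I_m) y x a :
  Xg (a :: rcons (rcons t y) x) = rcons (Xg (a :: rcons t y)) (x <= y).
Proof.
elim: t a => [|b t IH] a; first by [].
by rewrite !rcons_cons !Xg_cons IH.
Qed.

Lemma Xg_rev2 m (x y : 'I_m) r :
  Xg (rev (x :: y :: r)) = rcons (Xg (rev (y :: r))) (x <= y).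
Proof.
rewrite !rev_cons. case: (rev r) => [|a t]; first by [].
by rewrite !rcons_cons Xg_rcons2.
Qed.

Section Gen.
Variables (m : nat) (f1 e1 : nat -> 'I_m -> option 'I_m) (fuel i : nat).
Hypothesis fuel_gt0 : 0 < fuel.
Hypothesis Hf : forall x y, f1 i x = Some y ->
  nat_of_ord y = (nat_of_ord x).+1 /\ e1 i y = Some x.
Hypothesis He : forall x y, e1 i x = Some y -> f1 i y = Some x.
Hypothesis Hfe : forall x y z, f1 i x = Some y -> e1 i x = Some z -> False.

Local Notation fp k := ((tops f1 e1 fuel k).1 i).
Local Notation ep k := ((tops f1 e1 fuel k).2 i).
Local Notation ce x := (count_iter (e1 i) fuel x).

Lemma fN x z : e1 i x = Some z -> f1 i x = None.
Proof. move=> H. case E: (f1 i x) => [w|] //. by case: (Hfe E H). Qed.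
Lemma eN x z : f1 i x = Some z -> e1 i x = None.
Proof. move=> H. case E: (e1 i x) => [w|] //. by case: (Hfe H E). Qed.

Lemma fpE x y r0 : fp (size r0).+2 (x :: y :: r0) =
  if ce x < count_iter (fp (size r0).+1) (fuel * (size r0).+1) (y :: r0)
  then omap (fun r'' => x :: r'') (fp (size r0).+1 (y :: r0))
  else omap (fun z => z :: y :: r0) (f1 i x).
Proof. by []. Qed.

Lemma epE x y r0 : ep (size r0).+2 (x :: y :: r0) =
  if ce x <= count_iter (fp (size r0).+1) (fuel * (size r0).+1) (y :: r0)
  then omap (fun r'' => x :: r'') (ep (size r0).+1 (y :: r0))
  else omap (fun z => z :: y :: r0) (e1 i x).
Proof. by []. Qed.

Lemma key r0 : forall y,
  [/\ (f1 i y <> None -> fp (size r0).+1 (y :: r0) <> None),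
      (forall r'', fp (size r0).+1 (y :: r0) = Some r'' ->
         exists y' r0', [/\ r'' = y' :: r0', size r0' = size r0,
            Xg (rev r'') = Xg (rev (y :: r0)) &
            (y' = y \/ (f1 i y = Some y' /\ fp (size r0).+1 r'' = None))]) &
      (forall r'', ep (size r0).+1 (y :: r0) = Some r'' ->
         exists y' r0', [/\ r'' = y' :: r0', size r0' = size r0,
            Xg (rev r'') = Xg (rev (y :: r0)) &
            (y' = y \/ (e1 i y = Some y' /\ fp (size r0).+1 (y :: r0) = None))])].
Proof.
elim: r0 => [|y0 r00 IH] x.
  split.
  - by rewrite [fp _ _]/=; case: (f1 i x).
  - move=> r''; rewrite [fp _ _]/=.
    case E: (f1 i x) => [z|] //= [<-]. exists z, [::]; split => //.
    right; split => //. have [_ H] := Hf E. by rewrite /= (fN H).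
  - move=> r''; rewrite [ep _ _]/=.
    case E: (e1 i x) => [z|] //= [<-]. exists z, [::]; split => //.
    right; split => //. by rewrite /= (fN E).
have [IA IF IE] := IH y0.
have -> : size (y0 :: r00) = (size r00).+1 by [].
set cf := count_iter (fp (size r00).+1) (fuel * (size r00).+1) (y0 :: r00).
have cfpos : fp (size r00).+1 (y0 :: r00) <> None -> 0 < cf.
  case E: (fp _ _) => [w|] // _. apply: count_iter_gt0 E. by rewrite muln_gt0 fuel_gt0.
have ce0 : forall z, e1 i z = None -> ce z = 0 by move=> z; exact: count_iter_None.
have cepos : forall z w, e1 i z = Some w -> 0 < ce z.
  by move=> z w H; apply: count_iter_gt0 H.
split.
- move=> Hfx. rewrite fpE. case: ifP => Hc.
    have [b' Hb'] := count_iter_pos (leq_ltn_trans (leq0n _) Hc). by rewrite Hb'.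
  by case: (f1 i x) Hfx.
- move=> r''. rewrite fpE. case: ifP => Hc.
    have [r3 Hr3] := count_iter_pos (leq_ltn_trans (leq0n _) Hc). rewrite Hr3 /= => -[<-].
    have [y' [r0' [Er3 Hs HX Hh]]] := IF _ Hr3.
    exists x, r3; split; [done | by rewrite Er3 /= Hs | | by left].
    rewrite Er3 !Xg_rev2 -Er3 HX; congr rcons.
    case: Hh => [-> //|[Hfy Hn]].
    have Hle : cf <= 1 by exact: count_iter_le1 Hr3 Hn.
    have [Hy' Hey'] := Hf Hfy.
    have Hex : e1 i x = None.
      case E: (e1 i x) => [w|] //. have := cepos _ _ E. rewrite /cf in Hle. lia.
    case: (eqVneq x y') => [Exy|Nxy]; first by rewrite Exy Hey' in Hex.
    have : nat_of_ord x <> nat_of_ord y' by move=> /ord_inj; apply/eqP.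
    move=> H; apply/idP/idP; lia.
  case Efx: (f1 i x) => [x'|]; last by move=> H; discriminate H. case=> <-. have [Hx' Hex'] := Hf Efx. exists x', (y0 :: r00); split => //.
    rewrite !Xg_rev2; congr rcons.
    case: (eqVneq x y0) => [Exy|Nxy].
      have : 0 < cf by apply: cfpos; apply: IA; rewrite -Exy Efx.
      move=> Hcf. rewrite -/cf (ce0 _ (eN Efx)) in Hc. by rewrite Hcf in Hc.
    have : nat_of_ord x <> nat_of_ord y0 by move=> /ord_inj; apply/eqP.
    move=> H; apply/idP/idP; lia.
  right; split => //. rewrite fpE -/cf.
  have H1 := cepos _ _ Hex'. have H0 := ce0 _ (eN Efx).
  rewrite ifN; last by rewrite -/cf H0 in Hc; lia.
  by rewrite (fN Hex').
- move=> r''. rewrite epE -/cf. case: ifP => Hc.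
    case Er3: (ep _ _) => [r3|] //= [<-].
    have [y' [r0' [Er3' Hs HX Hh]]] := IE _ Er3.
    exists x, r3; split; [done | by rewrite Er3' /= Hs | | by left].
    rewrite Er3' !Xg_rev2 -Er3' HX; congr rcons.
    case: Hh => [-> //|[Hey Hn]].
    have Hcf : cf = 0 by apply: count_iter_None.
    have Hex : e1 i x = None.
      case E: (e1 i x) => [w|] //. have := cepos _ _ E. lia.
    have [Hy0 _] := Hf (He Hey).
    case: (eqVneq x y0) => [Exy|Nxy]; first by rewrite Exy Hey in Hex.
    have : nat_of_ord x <> nat_of_ord y0 by move=> /ord_inj; apply/eqP.
    move=> H; apply/idP/idP; lia.
  case Eex: (e1 i x) => [z|]; last by move=> H; discriminate H. case=> <-. exists z, (y0 :: r00); split => //.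
    rewrite !Xg_rev2; congr rcons.
    have Hfz := He Eex. have [Hx _] := Hf Hfz.
    case: (eqVneq z y0) => [Ezy|Nzy].
      have : 0 < cf by apply: cfpos; apply: IA; rewrite -Ezy Hfz.
      have : ce x <= 1 by apply: count_iter_le1 Eex (eN Hfz).
      lia.
    have : nat_of_ord z <> nat_of_ord y0 by move=> /ord_inj; apply/eqP.
    move=> H; apply/idP/idP; lia.
  right; split => //. rewrite fpE -/cf.
  rewrite ifN; last by lia.
  by rewrite (fN Eex).
Qed.

Lemma tens_f_ok b b' : tens_f f1 e1 fuel i b = Some b' ->
  size b' = size b /\ Xg b' = Xg b.
Proof.
have <- := revK b. move: (rev b) => r.
rewrite /tens_f revK size_rev. case: r => [|y r0] //.
case E: (fp _ _) => [r''|] //= [<-].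
have [_ IF _] := key r0 y.
have [y' [r0' [Er Hs HX _]]] := IF _ E.
split; [by rewrite !size_rev Er /= Hs | exact: HX].
Qed.

Lemma tens_e_ok b b' : tens_e f1 e1 fuel i b = Some b' ->
  size b' = size b /\ Xg b' = Xg b.
Proof.
have <- := revK b. move: (rev b) => r.
rewrite /tens_e revK size_rev. case: r => [|y r0] //.
case E: (ep _ _) => [r''|] //= [<-].
have [_ _ IE] := key r0 y.
have [y' [r0' [Er Hs HX _]]] := IE _ E.
split; [by rewrite !size_rev Er /= Hs | exact: HX].
Qed.

End Gen.

Lemma letA n i : 0 < i -> [/\
  (forall x y, @fA n i x = Some y -> nat_of_ord y = (nat_of_ord x).+1 /\ @eA n i y = Some x),
  (forall x y, @eA n i x = Some y -> @fA n i y = Some x) &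
  (forall x y z, @fA n i x = Some y -> @eA n i x = Some z -> False)].
Proof.
move=> Hi; split.
- move=> x y. rewrite /fA Hi /=. case: ifP => // /eqP Hx.
  case: insubP => // u _ Hv [<-]. split => //.
  rewrite /eA Hi Hv /=. have -> : (x.+1 == i) by lia.
  by apply: insub_ord.
- move=> x y. rewrite /eA Hi /=. case: ifP => // /eqP Hx.
  case: insubP => // u _ Hv [<-].
  rewrite /fA Hi Hv /=. have -> : ((x.-1) == i.-1) by lia.
  apply: insub_ord. lia.
- move=> x y z. rewrite /fA /eA Hi /=. case: ifP => // /eqP H1. case: ifP => // /eqP H2. lia.
Qed.

Lemma letC n i : 0 < i -> i <= n -> [/\
  (forall x y, @fC n i x = Some y -> nat_of_ord y = (nat_of_ord x).+1 /\ @eC n i y = Some x),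
  (forall x y, @eC n i x = Some y -> @fC n i y = Some x) &
  (forall x y z, @fC n i x = Some y -> @eC n i x = Some z -> False)].
Proof.
move=> Hi Hin; split.
- move=> x y. rewrite /fC Hi Hin /=. case: ifP => // /orP Hx.
  case: insubP => // u _ Hv [<-]. split => //.
  rewrite /eC Hi Hin Hv /=.
  have -> : (x.+1 == i) || (x.+1 == n.*2 - i).
    by case: Hx => /eqP Hx; apply/orP; [left|right]; apply/eqP; lia.
  by apply: insub_ord.
- move=> x y. rewrite /eC Hi Hin /=. case: ifP => // /orP Hx.
  case: insubP => // u _ Hv [<-].
  rewrite /fC Hi Hin Hv /=.
  have -> : ((x.-1) == i.-1) || ((x.-1) == n.*2 - i.+1).
    by case: Hx => /eqP Hx; apply/orP; [left|right]; apply/eqP; lia.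
  apply: insub_ord. case: Hx => /eqP Hx; lia.
- move=> x y z. rewrite /fC /eC Hi Hin /=. case: ifP => // /orP H1.
  case: ifP => // /orP H2.
  by case: H1 => /eqP H1; case: H2 => /eqP H2; lia.
Qed.

Lemma XiE n (b : seq (letter n)) : Xi_of b = Xg b.
Proof. by []. Qed.

Theorem mainTheorem8 (n : nat) (Xi : seq bool) :
  size Xi = n.-1 ->
  (* stability under the gl_{2n}-crystal operators, i = 1..2n-1 *)
  (forall i : nat, 1 <= i <= (n.*2).-1 ->
     forall b b' : seq (letter n), @B_Xi n Xi b ->
       (@fAn n i b = Some b' -> @B_Xi n Xi b') /\
       (@eAn n i b = Some b' -> @B_Xi n Xi b')) /\
  (* stability under the sp_{2n}-crystal operators, i = 1..n *)
  (forall i : nat, 1 <= i <= n ->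
     forall b b' : seq (letter n), @B_Xi n Xi b ->
       (@fCn n i b = Some b' -> @B_Xi n Xi b') /\
       (@eCn n i b = Some b' -> @B_Xi n Xi b')).
Proof.
move=> _; split.
- move=> i /andP [Hi _] b b' Hb.
  case: b Hb => [|x b0] Hb; first by split.
  have Hfuel : 0 < n.*2 by have := ltn_ord x; lia.
  have [L1 L2 L3] := letA n Hi.
  split => H.
    have [Hs HX] := tens_f_ok Hfuel L1 L2 L3 H.
    by move: Hb; rewrite /B_Xi !XiE Hs HX.
  have [Hs HX] := tens_e_ok Hfuel L1 L2 L3 H.
  by move: Hb; rewrite /B_Xi !XiE Hs HX.
- move=> i /andP [Hi Hin] b b' Hb.
  case: b Hb => [|x b0] Hb; first by split.
  have Hfuel : 0 < n.*2 by have := ltn_ord x; lia.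
  have [L1 L2 L3] := letC Hi Hin.
  split => H.
    have [Hs HX] := tens_f_ok Hfuel L1 L2 L3 H.
    by move: Hb; rewrite /B_Xi !XiE Hs HX.
  have [Hs HX] := tens_e_ok Hfuel L1 L2 L3 H.
  by move: Hb; rewrite /B_Xi !XiE Hs HX.
Qed.
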